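(* Consider Algorithm iR2N (described in the context) and suppose (A1), (A2), (A3), (A4), (A6), (A7) hold. Let $\epsilon>0$, $k_\epsilon=\min\{k\in\mathbb{N}\mid \nu_k^{-1}\|\hat s_{k,\mathrm{cp}}\|<\epsilon\}$, $\mathcal{S}(\epsilon)=\{k\in\mathbb{N}\mid\hat\rho_k\ge\hat\eta_1,\ k<k_\epsilon\}$ and $\mathcal{U}(\epsilon)=\{k\in\mathbb{N}\mid\hat\rho_k<\hat\eta_1,\ k<k_\epsilon\}$. Then $$|\mathcal{S}(\epsilon)|+|\mathcal{U}(\epsilon)|\le\big(1+|\log_{\gamma_1}(\gamma_3)|\big)\,\omega_s\,\epsilon^{-2}+\log_{\gamma_1}(\sigma_{\max}/\sigma_0)=O(\epsilon^{-2}),$$ where $\omega_s=\dfrac{(f+h)(x_0)-(f+h)_{\mathrm{low}}}{\tfrac12\eta_1(1-\theta_1)\nu_{\min}}$. In particular $k_\epsilon=|\mathcal{S}(\epsilon)|+|\mathcal{U}(\epsilon)|+1$ is finite.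
   Context: Setting. $f:\mathbb{R}^n\to\mathbb{R}$ is continuously differentiable, $h:\mathbb{R}^n\to\mathbb{R}\cup\{+\infty\}$ is proper and lower semicontinuous; the problem is $\min_x f(x)+h(x)$. $\|\cdot\|$ is the Euclidean norm (spectral norm for matrices). For each $x$, approximations $\hat f(x)\in\mathbb{R}$ of $f(x)$ and $\hat\nabla f(x)\in\mathbb{R}^n$ of $\nabla f(x)$ are available. For each $x$, $\psi(\cdot;x):\mathbb{R}^n\to\mathbb{R}\cup\{+\infty\}$ is proper, lsc, satisfies $\psi(0;x)=h(x)$ and $\partial\psi(0;x)\subseteq\partial h(x)$ ($\partial$ = limiting subdifferential), and is uniformly prox-bounded: there is $\lambda>0$ such that for every $x$ and every $0<\lambda'<\lambda$, $w\mapsto\psi(w;x)+\tfrac{1}{2\lambda'}\|w\|^2$ is bounded below. Models: $\varphi_{\mathrm{cp}}(s;x)=\hat f(x)+\hat\nabla f(x)^Ts$; $m_{\mathrm{cp}}(s;x,\nu^{-1})=\varphi_{\mathrm{cp}}(s;x)+\tfrac12\nu^{-1}\|s\|^2+\psi(s;x)$; for a symmetric $B(x)\in\mathbb{R}^{n\times n}$, $\varphi(s;x)=\hat f(x)+\hat\nabla f(x)^Ts+\tfrac12 s^TB(x)s$ and $m(s;x,\sigma)=\varphi(s;x)+\tfrac12\sigma\|s\|^2+\psi(s;x)$. Algorithm iR2N. Constants: $\kappa_f,\kappa_\nabla>0$, $0<\gamma_3\le 1<\gamma_1\le\gamma_2$, $0<\hat\eta_1\le\hat\eta_2<1$, $0<\theta_1<1<\theta_2$,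 $\sigma_{\min}>4\kappa_f\theta_1\theta_2^2/(\hat\eta_1(1-\theta_1))$, $\sigma_0\ge\sigma_{\min}$, $x_0\in\mathbb{R}^n$. At iteration $k=0,1,\dots$: choose symmetric $B_k=B(x_k)$; set $\nu_k=\theta_1/(\|B_k\|+\sigma_k)$; compute $\hat s_{k,\mathrm{cp}}$ with $m_{\mathrm{cp}}(\hat s_{k,\mathrm{cp}};x_k,\nu_k^{-1})\le m_{\mathrm{cp}}(0;x_k,\nu_k^{-1})$ (an approximate minimizer of $m_{\mathrm{cp}}(\cdot;x_k,\nu_k^{-1})$ obtained by a descent procedure from $s=0$) and set $\hat\xi_{k,\mathrm{cp}}=(\varphi_{\mathrm{cp}}+\psi)(0;x_k)-(\varphi_{\mathrm{cp}}+\psi)(\hat s_{k,\mathrm{cp}};x_k)$; compute $s_k$ with $m(s_k;x_k,\sigma_k)\le m(\hat s_{k,\mathrm{cp}};x_k,\sigma_k)$; if $\|s_k\|>\theta_2\|\hat s_{k,\mathrm{cp}}\|$, reset $s_k=\hat s_{k,\mathrm{cp}}$ (these computations are repeated with refined $\hat f,\hat\nabla f$ until (A6) holds). Compute $$\hat\rho_k=\frac{\hat f(x_k)+h(x_k)-\hat f(x_k+s_k)-h(x_k+s_k)}{\varphi(0;x_k)+\psi(0;x_k)-\varphi(s_k;x_k)-\psi(s_k;x_k)},$$ where $\varphi(\cdot;x_k)$ uses $B_k$. If $\hat\rho_k\ge\hat\eta_1$ (successful) set $x_{k+1}=x_k+s_k$, else $x_{k+1}=x_k$. Choose $\sigma_{k+1}\in[\gamma_3\sigma_k,\sigma_k]$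 if $\hat\rho_k\ge\hat\eta_2$ (very successful), $\sigma_{k+1}\in[\sigma_k,\gamma_1\sigma_k]$ if $\hat\eta_1\le\hat\rho_k<\hat\eta_2$, $\sigma_{k+1}\in[\gamma_1\sigma_k,\gamma_2\sigma_k]$ if $\hat\rho_k<\hat\eta_1$; then reset $\sigma_{k+1}=\max(\sigma_{k+1},\sigma_{\min})$. Assumptions. (A1) $|f(x+s)-f(x)-\nabla f(x)^Ts|\le\tfrac12L\|s\|^2$ for all $x,s$, for some $L\ge0$. (A2) $\|B_k\|\le\kappa_B$ for all $k$, for some $\kappa_B>0$. (A3) $|\psi(s;x)-h(x+s)|\le\kappa_h\|s\|^2$ for all $x,s$, for some $\kappa_h>0$. (A4) For all $k$, $\varphi(0;x_k)+\psi(0;x_k)-(\varphi(s_k;x_k)+\psi(s_k;x_k))\ge(1-\theta_1)\hat\xi_{k,\mathrm{cp}}$. (A6) For all $k$: $|f(x_k)-\hat f(x_k)|\le\kappa_f\|s_k\|^2$, $|f(x_k+s_k)-\hat f(x_k+s_k)|\le\kappa_f\|s_k\|^2$, $\|\nabla f(x_k)-\hat\nabla f(x_k)\|\le\kappa_\nabla\|s_k\|$. (A7) There is $(f+h)_{\mathrm{low}}\in\mathbb{R}$ with $(f+h)(x)\ge(f+h)_{\mathrm{low}}$ for all $x$. Constants: $\eta_1=\hat\eta_1-4\kappa_f\theta_1\theta_2^2/((1-\theta_1)\sigma_{\min})$; $\sigma_{\mathrm{succ}}=\max\big(\theta_1\theta_2^2(L+\kappa_B+2\kappa_h+4\kappa_f+2\kappa_\nabla)/((1-\theta_1)(1-\hat\eta_2)),\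 \lambda^{-1}\big)$; $\sigma_{\max}=\max(\sigma_0,\gamma_2\sigma_{\mathrm{succ}})$ (an upper bound on all $\sigma_k$); $\nu_{\min}=\theta_1/(\kappa_B+\sigma_{\max})$. *)

(* Defs.v *)
From HB Require Import structures.
From mathcomp Require Import all_boot all_order all_algebra.
From mathcomp Require Import all_classical all_reals all_analysis.
Set Implicit Arguments. Unset Strict Implicit. Unset Printing Implicit Defensive.
Import Order.TTheory GRing.Theory Num.Theory.
Local Open Scope ring_scope.

Section IR2N_defs.
Variables (R : realType) (n : nat).
Local Notation vec := 'rV[R]_n.

Definition dot (u v : vec) : R := (u *m v^T) 0 0.
Definition enorm (v : vec) : R := Num.sqrt (dot v v).

Definition quad (B : 'M[R]_n) (s : vec) : R := (s *m B *m s^T) 0 0.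

Definition spnorm (B : 'M[R]_n) : R :=
  sup [set r : R | exists v : vec, enorm v <= 1 /\ r = enorm (v *m B)].

Definition has_gradient (f : vec -> R) (g : vec -> vec) : Prop :=
  forall x e, 0 < e -> exists d, 0 < d /\
    forall s, enorm s < d -> `|f (x + s) - f x - dot (g x) s| <= e * enorm s.

Definition vcontinuous (g : vec -> vec) : Prop :=
  forall x e, 0 < e -> exists d, 0 < d /\
    forall y, enorm (y - x) < d -> enorm (g y - g x) < e.

Definition proper_fun (h : vec -> \bar R) : Prop :=
  (forall x, h x != -oo%E) /\ exists x, h x \is a fin_num.

Definition lsc (h : vec -> \bar R) : Prop :=
  forall x (a : R), (a%:E < h x)%E -> exists d, 0 < d /\
    forall y, enorm (y - x) < d -> (a%:E < h y)%E.

Definition regular_subgrad (h : vec -> \bar R) (x v : vec) : Prop :=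
  h x \is a fin_num /\
  forall e, 0 < e -> exists d, 0 < d /\ forall y, enorm (y - x) < d ->
    ((fine (h x) + dot v (y - x) - e * enorm (y - x))%:E <= h y)%E.

Definition limiting_subgrad (h : vec -> \bar R) (x v : vec) : Prop :=
  h x \is a fin_num /\
  exists (xs vs : nat -> vec),
    (forall j, regular_subgrad h (xs j) (vs j)) /\
    (forall e, 0 < e -> exists N : nat, forall j : nat, (N <= j)%N ->
       [/\ enorm (xs j - x) < e, enorm (vs j - v) < e
         & `|fine (h (xs j)) - fine (h x)| < e]).

(* uniform prox-boundedness of psi(.;x) (psi x w stands for psi(w;x)) *)
Definition unif_prox_bounded (psi : vec -> vec -> \bar R) (lam : R) : Prop :=
  0 < lam /\ forall x lam', 0 < lam' -> lam' < lam ->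
    exists c : R, forall w, (c%:E <= psi x w + (enorm w ^+ 2 / (2 * lam'))%:E)%E.

Definition phi_cp (fx : R) (g s : vec) : R := fx + dot g s.
Definition phi_q (fx : R) (g : vec) (B : 'M[R]_n) (s : vec) : R :=
  fx + dot g s + quad B s / 2.
Definition m_cp (fx : R) (g : vec) (psix : vec -> \bar R) (nuinv : R) (s : vec)
  : \bar R := ((phi_cp fx g s + nuinv / 2 * enorm s ^+ 2)%:E + psix s)%E.
Definition m_q (fx : R) (g : vec) (B : 'M[R]_n) (psix : vec -> \bar R) (sig : R)
  (s : vec) : \bar R := ((phi_q fx g B s + sig / 2 * enorm s ^+ 2)%:E + psix s)%E.

End IR2N_defs.

(* Main.v *)
Require Import Defs.
From HB Require Import structures.
From mathcomp Require Import all_boot all_order all_algebra.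
From mathcomp Require Import all_classical all_reals all_analysis.
From mathcomp Require Import ring lra.
Import Order.TTheory GRing.Theory Num.Theory.
Set Implicit Arguments. Unset Strict Implicit.
Local Open Scope ring_scope.

Section Vec.
Variables (R : realType) (n : nat).
Local Notation vec := 'rV[R]_n.

Lemma dotE (u v : vec) : dot u v = \sum_i u 0 i * v 0 i.
Proof. by rewrite /dot !mxE; apply: eq_bigr => i _; rewrite mxE. Qed.

Lemma dot_ge0 (u : vec) : 0 <= dot u u.
Proof. rewrite dotE; apply: sumr_ge0 => i _; by rewrite -expr2 sqr_ge0. Qed.

Lemma enorm_ge0 (u : vec) : 0 <= enorm u.
Proof. exact: sqrtr_ge0. Qed.

Lemma enorm_sq (u : vec) : enorm u ^+ 2 = dot u u.
Proof. by rewrite /enorm sqr_sqrtr // dot_ge0. Qed.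

Lemma dot0r (u : vec) : dot 0 u = 0.
Proof. by rewrite dotE big1 // => i _; rewrite mxE mul0r. Qed.

Lemma dotr0 (u : vec) : dot u 0 = 0.
Proof. by rewrite dotE big1 // => i _; rewrite mxE mulr0. Qed.

Lemma enorm0 : enorm (0 : vec) = 0.
Proof. by rewrite /enorm dot0r sqrtr0. Qed.

Lemma dotBl (u v w : vec) : dot (u - v) w = dot u w - dot v w.
Proof.
rewrite !dotE -sumrB; apply: eq_bigr => i _; by rewrite !mxE mulrBl.
Qed.

Lemma quad0 (A : 'M[R]_n) : quad A 0 = 0.
Proof. by rewrite /quad mul0mx mul0mx mxE. Qed.

Lemma CS2 (I : finType) (a b : I -> R) :
  (\sum_i a i * b i) ^+ 2 <= (\sum_i a i ^+ 2) * (\sum_i b i ^+ 2).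
Proof.
have key : 2%:R * ((\sum_i a i ^+ 2) * (\sum_i b i ^+ 2) - (\sum_i a i * b i) ^+ 2)
   = \sum_i \sum_j (a i * b j - a j * b i) ^+ 2.
  have E1 : \sum_i \sum_j (a i * b j - a j * b i) ^+ 2 =
     \sum_i \sum_j (a i ^+ 2 * b j ^+ 2) + \sum_i \sum_j (a j ^+ 2 * b i ^+ 2)
     - 2%:R * \sum_i \sum_j (a i * b i * (a j * b j)).
    rewrite mulr_sumr -big_split /= -sumrB; apply: eq_bigr => i _.
    rewrite mulr_sumr -big_split /= -sumrB; apply: eq_bigr => j _.
    by rewrite sqrrB; ring.
  rewrite E1 exchange_big /= -big_split /=.
  have E2 : \sum_i \sum_j (a i * b i * (a j * b j)) = (\sum_i a i * b i) ^+ 2.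
    by rewrite expr2 mulr_suml; apply: eq_bigr => i _; rewrite mulr_sumr.
  have E3 : \sum_i (\sum_j a j ^+ 2 * b i ^+ 2 + \sum_j a j ^+ 2 * b i ^+ 2)
     = 2%:R * ((\sum_i a i ^+ 2) * (\sum_i b i ^+ 2)).
    rewrite mulr_sumr mulr_sumr; apply: eq_bigr => i _.
    by rewrite -mulr_suml; ring.
  rewrite E2 E3; ring.
have : 0 <= \sum_i \sum_j (a i * b j - a j * b i) ^+ 2.
  by apply: sumr_ge0 => i _; apply: sumr_ge0 => j _; exact: sqr_ge0.
rewrite -key pmulr_rge0 ?subr_ge0 //.
Qed.

Lemma CS (u v : vec) : `|dot u v| <= enorm u * enorm v.
Proof.
rewrite /enorm -sqrtrM ?dot_ge0 // -(sqrtr_sqr (dot u v)) ler_sqrt; last first.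
  by apply: mulr_ge0; apply: dot_ge0.
rewrite !dotE; have := CS2 (fun i => u 0 i) (fun i => v 0 i).
by congr (_ <= _ * _); apply: eq_bigr => i _; rewrite expr2.
Qed.

Definition frob (A : 'M[R]_n) : R := Num.sqrt (\sum_i \sum_j A i j ^+ 2).

Lemma enorm_mul_le (v : vec) (A : 'M[R]_n) : enorm (v *m A) <= frob A * enorm v.
Proof.
rewrite /enorm /frob -sqrtrM; last by apply: sumr_ge0 => i _; apply: sumr_ge0 => j _; exact: sqr_ge0.
rewrite ler_sqrt; last by apply: mulr_ge0; [apply: sumr_ge0 => i _; apply: sumr_ge0 => j _; exact: sqr_ge0|exact: dot_ge0].
rewrite dotE exchange_big mulr_suml; apply: ler_sum => j _.
rewrite dotE.
have -> : (v *m A) 0 j * (v *m A) 0 j = (\sum_i v 0 i * A i j) ^+ 2 by rewrite expr2 !mxE.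
rewrite mulrC; have := CS2 (fun i => v 0 i) (fun i => A i j).
by under eq_bigr => i _ do rewrite expr2.
Qed.

Lemma frob_ge0 (A : 'M[R]_n) : 0 <= frob A.
Proof. exact: sqrtr_ge0. Qed.

Lemma enormZ (c : R) (v : vec) : enorm (c *: v) = `|c| * enorm v.
Proof.
rewrite /enorm.
have -> : dot (c *: v) (c *: v) = c ^+ 2 * dot v v.
  rewrite !dotE mulr_sumr; apply: eq_bigr => i _; rewrite !mxE; ring.
by rewrite sqrtrM ?sqr_ge0 // sqrtr_sqr.
Qed.

Lemma spnorm_prop (A : 'M[R]_n) :
  0 <= spnorm A /\ forall v : vec, enorm (v *m A) <= spnorm A * enorm v.
Proof.
rewrite /spnorm; set E := (X in sup X).
have E0 : E 0 by exists 0; rewrite enorm0 mul0mx enorm0; split => //; exact: ler01.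
have hs : has_sup E.
  split; first by exists 0.
  exists (frob A) => r [v [v1 ->]].
  apply: (le_trans (enorm_mul_le v A)).
  by rewrite -[leRHS]mulr1 ler_wpM2l // frob_ge0.
have ub := sup_upper_bound hs.
have sp0 : 0 <= spnorm A by exact: ub.
split => // v.
have [e0|e0] := eqVneq (enorm v) 0.
  rewrite e0 mulr0; apply: le_trans (enorm_mul_le v A) _; by rewrite e0 mulr0.
have ep : 0 < enorm v by rewrite lt_def e0 enorm_ge0.
have : E (enorm (((enorm v)^-1 *: v) *m A)).
  exists ((enorm v)^-1 *: v); split => //.
  by rewrite enormZ ger0_norm ?invr_ge0 ?enorm_ge0 // mulVf.
move/ub; rewrite -scalemxAl enormZ ger0_norm ?invr_ge0 ?enorm_ge0 //.
by rewrite ler_pdivrMl // mulrC.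
Qed.

Lemma quad_le (A : 'M[R]_n) (v : vec) : `|quad A v| <= spnorm A * enorm v ^+ 2.
Proof.
have -> : quad A v = dot (v *m A) v by [].
apply: le_trans (CS _ _) _.
rewrite expr2 mulrA ler_wpM2r ?enorm_ge0 //; exact: (spnorm_prop A).2.
Qed.

End Vec.

Section Aux.
Variable R : realType.
Lemma efin_le (a b : R) (y z : \bar R) :
  (a%:E + y <= b%:E + z)%E -> z \is a fin_num -> y != -oo%E -> y \is a fin_num.
Proof.
case: y => [r| |] //= H; case: z H => [t| |] //=.
Qed.

Lemma key_le (P Q S al be ga de : R) : 0 <= Q -> 0 <= ga -> 0 <= de ->
  S <= be * Q -> al * Q <= P -> ga * be <= de * al -> ga * S <= de * P.
Proof.
move=> Q0 ga0 de0 SQ PQ gb.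
apply: (le_trans (ler_wpM2l ga0 SQ)); rewrite mulrA.
apply: (le_trans (ler_wpM2r Q0 gb)); rewrite -mulrA.
exact: ler_wpM2l.
Qed.

Lemma absle (t b : R) : `|t| <= b -> -b <= t /\ t <= b.
Proof. by rewrite ler_norml => /andP. Qed.

Lemma card_sumR (N : nat) (P : nat -> bool) :
  (#|[set k : 'I_N | P k]|%:R : R) = \sum_(k < N) (P k)%:R.
Proof.
rewrite -sum1_card natr_sum big_mkcond /=; apply: eq_bigr => i _.
by rewrite inE; case: (P i).
Qed.
End Aux.

Unset Implicit Arguments.

Theorem theorem3p7
  (R : realType) (n : nat)
  (* problem data *)
  (f : 'rV[R]_n -> R) (gradf : 'rV[R]_n -> 'rV[R]_n)
  (h : 'rV[R]_n -> \bar R)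
  (psi : 'rV[R]_n -> 'rV[R]_n -> \bar R)   (* psi x w = psi(w; x) *)
  (lam : R)
  (* algorithm constants *)
  (kf kg g1 g2 g3 eh1 eh2 th1 th2 smin s0 : R) (x0 : 'rV[R]_n)
  (* constants of the assumptions *)
  (L kB kh flow : R)
  (* the run of the algorithm *)
  (x : nat -> 'rV[R]_n) (sigma : nat -> R) (B : nat -> 'M[R]_n)
  (fhat : nat -> 'rV[R]_n -> R) (ghat : nat -> 'rV[R]_n -> 'rV[R]_n)
  (scp scand s : nat -> 'rV[R]_n)
  (eps : R) :
  (* standing assumptions *)
  has_gradient f gradf -> vcontinuous gradf ->
  proper_fun h -> lsc h ->
  (forall y, proper_fun (psi y)) -> (forall y, lsc (psi y)) ->
  (forall y, psi y 0 = h y) ->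
  (forall y v, limiting_subgrad (psi y) 0 v -> limiting_subgrad h y v) ->
  unif_prox_bounded psi lam ->
  (* constants *)
  0 < kf -> 0 < kg ->
  0 < g3 -> g3 <= 1 -> 1 < g1 -> g1 <= g2 ->
  0 < eh1 -> eh1 <= eh2 -> eh2 < 1 ->
  0 < th1 -> th1 < 1 -> 1 < th2 ->
  4 * kf * th1 * th2 ^+ 2 / (eh1 * (1 - th1)) < smin ->
  smin <= s0 ->
  (* x0 lies in the domain of h, so that (f+h)(x0) is a real number *)
  h x0 \is a fin_num ->
  0 < eps ->
  let nu := fun k => th1 / (spnorm (B k) + sigma k) in
  let phik := fun k (w : 'rV[R]_n) => phi_q (fhat k (x k)) (ghat k (x k)) (B k) w in
  let phicpk := fun k (w : 'rV[R]_n) => phi_cp (fhat k (x k)) (ghat k (x k)) w in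
  let xicp := fun k =>
    (phicpk k 0 + fine (psi (x k) 0)) - (phicpk k (scp k) + fine (psi (x k) (scp k))) in
  let rho := fun k =>
    (fhat k (x k) + fine (h (x k)) - fhat k (x k + s k) - fine (h (x k + s k))) /
    (phik k 0 + fine (psi (x k) 0) - phik k (s k) - fine (psi (x k) (s k))) in
  (* the algorithm iR2N *)
  x 0 = x0 -> sigma 0 = s0 ->
  (forall k, (B k)^T = B k) ->
  (forall k, (m_cp (fhat k (x k)) (ghat k (x k)) (psi (x k)) (nu k)^-1 (scp k)
              <= m_cp (fhat k (x k)) (ghat k (x k)) (psi (x k)) (nu k)^-1 0)%E) ->
  (forall k, (m_q (fhat k (x k)) (ghat k (x k)) (B k) (psi (x k)) (sigma k) (scand k)
              <= m_q (fhat k (x k)) (ghat k (x k)) (B k) (psi (x k)) (sigma k) (scp k))%E) ->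
  (forall k, s k = if th2 * enorm (scp k) < enorm (scand k) then scp k else scand k) ->
  (forall k, x k.+1 = if eh1 <= rho k then x k + s k else x k) ->
  (forall k, exists sp : R,
     [/\ eh2 <= rho k -> g3 * sigma k <= sp <= sigma k,
         eh1 <= rho k < eh2 -> sigma k <= sp <= g1 * sigma k,
         rho k < eh1 -> g1 * sigma k <= sp <= g2 * sigma k
       & sigma k.+1 = Num.max sp smin]) ->
  (* (A1) *)
  0 <= L ->
  (forall y w, `|f (y + w) - f y - dot (gradf y) w| <= L / 2 * enorm w ^+ 2) ->
  (* (A2) *)
  0 < kB -> (forall k, spnorm (B k) <= kB) ->
  (* (A3) *)
  0 < kh ->
  (forall y w, (psi y w \is a fin_num <-> h (y + w) \is a fin_num) /\
               `|fine (psi y w) - fine (h (y + w))| <= kh * enorm w ^+ 2) ->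
  (* (A4) *)
  (forall k, (phik k 0 + fine (psi (x k) 0)) - (phik k (s k) + fine (psi (x k) (s k)))
             >= (1 - th1) * xicp k) ->
  (* (A6) *)
  (forall k, [/\ `|f (x k) - fhat k (x k)| <= kf * enorm (s k) ^+ 2,
                 `|f (x k + s k) - fhat k (x k + s k)| <= kf * enorm (s k) ^+ 2
               & enorm (gradf (x k) - ghat k (x k)) <= kg * enorm (s k)]) ->
  (* (A7) *)
  (forall y, (flow%:E <= (f y)%:E + h y)%E) ->
  let eta1 := eh1 - 4 * kf * th1 * th2 ^+ 2 / ((1 - th1) * smin) in
  let ssucc := Num.max (th1 * th2 ^+ 2 * (L + kB + 2 * kh + 4 * kf + 2 * kg)
                          / ((1 - th1) * (1 - eh2))) lam^-1 in
  let smax := Num.max s0 (g2 * ssucc) in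
  let numin := th1 / (kB + smax) in
  let omega := (f x0 + fine (h x0) - flow) / (1 / 2 * eta1 * (1 - th1) * numin) in
  let crit := fun k => (nu k)^-1 * enorm (scp k) < eps in
  (exists k, crit k) /\
  forall keps : nat, crit keps -> (forall j, (j < keps)%N -> ~ crit j) ->
    (#|[set k : 'I_keps | eh1 <= rho k]|%:R
       + #|[set k : 'I_keps | rho k < eh1]|%:R : R)
    <= (1 + `|ln g3 / ln g1|) * omega * eps ^-2 + ln (smax / s0) / ln g1.
Proof.
move=> hgrad hgc hprop hlsc psiprop psilsc psi0 psisub hprox kf0 kg0 g30 g31 g11 g12
  eh10 eh12 eh21 th10 th11 th21 sminH smins0 hx0 eps0 nu phik phicpk xicp rho
  X0 S0 Bsym mcp mq sdef xdef sigdef L0 A1 kB0 A2 kh0 A3 A4 A6 A7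
  eta1 ssucc smax numin omega crit.
have th1' : 0 < 1 - th1 by rewrite subr_gt0.
have eh2' : 0 < 1 - eh2 by rewrite subr_gt0.
have th2p : 0 < th2 by apply: lt_trans th21.
have g1p : 0 < g1 by apply: lt_trans g11.
have smin0 : 0 < smin.
  apply: le_lt_trans sminH; apply: divr_ge0; last by apply: mulr_ge0; apply: ltW.
  by apply: mulr_ge0; [apply: mulr_ge0; [apply: mulr_ge0|]|]; rewrite ?sqr_ge0 // ltW.
have sig_ge : forall k, smin <= sigma k.
  elim=> [|k IH]; first by rewrite S0.
  by have [sp [_ _ _ ->]] := sigdef k; rewrite le_max lexx orbT.
have sigp : forall k, 0 < sigma k by move=> k; apply: lt_le_trans (sig_ge k).
have spn0 : forall k, 0 <= spnorm (B k) by move=> k; exact: (spnorm_prop (B k)).1.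
have nup : forall k, 0 < nu k.
  by move=> k; rewrite /nu divr_gt0 // ltr_wpDl.
have nuinv : forall k, (nu k)^-1 = (spnorm (B k) + sigma k) / th1.
  by move=> k; rewrite /nu invf_div.
have nuinv_ge : forall k, sigma k / th1 <= (nu k)^-1.
  by move=> k; rewrite nuinv ler_pM2r ?invr_gt0 // lerDr.
have psi0f : forall k, h (x k) \is a fin_num -> psi (x k) 0 \is a fin_num.
  by move=> k hk; rewrite psi0.
have cpfin : forall k, h (x k) \is a fin_num -> psi (x k) (scp k) \is a fin_num.
  move=> k hk; apply: efin_le (mcp k) _ _; first exact: psi0f.
  exact: (psiprop (x k)).1.
have candfin : forall k, h (x k) \is a fin_num -> psi (x k) (scand k) \is a fin_num.
  move=> k hk; apply: efin_le (mq k) (cpfin k hk) _.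
  exact: (psiprop (x k)).1.
have sfin : forall k, h (x k) \is a fin_num -> psi (x k) (s k) \is a fin_num.
  by move=> k hk; rewrite sdef; case: ifP => _; [exact: cpfin|exact: candfin].
have hfin : forall k, h (x k) \is a fin_num.
  elim=> [|k IH]; first by rewrite X0.
  rewrite xdef; case: ifP => // _; exact/(A3 (x k) (s k)).1/sfin.
pose pred k := phik k 0 + fine (psi (x k) 0) - phik k (s k) - fine (psi (x k) (s k)).
pose ared k := fhat k (x k) + fine (h (x k)) - fhat k (x k + s k) - fine (h (x k + s k)).
pose F k := f (x k) + fine (h (x k)).
have rhoE : forall k, rho k = ared k / pred k by [].
have xi_ge : forall k, (nu k)^-1 / 2 * enorm (scp k) ^+ 2 <= xicp k.
  move=> k; have := mcp k.
  rewrite /m_cp -(fineK (cpfin k (hfin k))) -(fineK (psi0f k (hfin k))) -!EFinD lee_fin.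
  rewrite /xicp /phicpk /phi_cp dotr0 enorm0 expr0n /= mulr0 => H; clear -H; lra.
have sle : forall k, enorm (s k) <= th2 * enorm (scp k).
  move=> k; rewrite sdef; case: ltP => H //.
  by rewrite ler_peMl ?enorm_ge0 // ltW.
have sle2 : forall k, enorm (s k) ^+ 2 <= th2 ^+ 2 * enorm (scp k) ^+ 2.
  move=> k; rewrite -exprMn; apply: lerXn2r; rewrite ?nnegrE ?enorm_ge0 ?sle //.
  by apply: mulr_ge0; [apply: ltW|apply: enorm_ge0].
have predge : forall k, (1 - th1) * xicp k <= pred k.
  move=> k; have := A4 k; rewrite /pred => H; clear -H; lra.
have diff : forall k, `|ared k - pred k| <=
   kf * enorm (s k) ^+ 2 + kf * enorm (s k) ^+ 2 + L / 2 * enorm (s k) ^+ 2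
   + kg * enorm (s k) ^+ 2 + kB / 2 * enorm (s k) ^+ 2 + kh * enorm (s k) ^+ 2.
  move=> k; have [a1 a2 a3] := A6 k.
  have [b11 b12] := absle a1; have [b21 b22] := absle a2.
  have [b31 b32] := absle (A1 (x k) (s k)).
  have t4 : `|dot (gradf (x k) - ghat k (x k)) (s k)| <= kg * enorm (s k) ^+ 2.
    apply: le_trans (CS _ _) _; rewrite expr2 mulrA ler_wpM2r ?enorm_ge0 //.
  have [b41 b42] := absle t4; rewrite dotBl in b41 b42.
  have t5 : `|quad (B k) (s k)| <= kB * enorm (s k) ^+ 2.
    apply: le_trans (quad_le _ _) _; rewrite ler_wpM2r ?exprn_ge0 ?enorm_ge0 //.
  have [b51 b52] := absle t5.
  have [b61 b62] := absle (A3 (x k) (s k)).2.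
  rewrite /ared /pred /phik /phi_q dotr0 quad0 psi0.
  rewrite ler_norml; apply/andP; clear -b11 b12 b21 b22 b31 b32 b41 b42 b51 b52 b61 b62; split; lra.
have Q0 : forall k, 0 <= enorm (scp k) ^+ 2 by move=> k; rewrite exprn_ge0 ?enorm_ge0.
have S0' : forall k, 0 <= enorm (s k) ^+ 2 by move=> k; rewrite exprn_ge0 ?enorm_ge0.
have noncrit : forall k, ~ crit k -> eps <= (nu k)^-1 * enorm (scp k).
  by move=> k nc; rewrite leNgt; apply/negP => H; apply: nc.
have pred_xi : forall k, (1 - th1) * ((nu k)^-1 / 2 * enorm (scp k) ^+ 2) <= pred k.
  move=> k; apply: le_trans (predge k); apply: ler_wpM2l; [exact: ltW|exact: xi_ge].
have predlow : forall k, ~ crit k -> (1 - th1) / 2 * nu k * eps ^+ 2 <= pred k.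
  move=> k nc; apply: le_trans (pred_xi k).
  have nz : nu k != 0 by rewrite gt_eqF.
  have -> : (1 - th1) * ((nu k)^-1 / 2 * enorm (scp k) ^+ 2)
     = (1 - th1) / 2 * nu k * ((nu k)^-1 * enorm (scp k)) ^+ 2 by field.
  apply: ler_wpM2l; first by apply: mulr_ge0; [apply: divr_ge0; [exact: ltW|] | exact: ltW].
  have e0 := ltW eps0; have m := noncrit k nc.
  by rewrite !expr2; apply: ler_pM.
have predpos : forall k, ~ crit k -> 0 < pred k.
  move=> k nc; apply: lt_le_trans (predlow k nc).
  apply: mulr_gt0; [apply: mulr_gt0; [exact: divr_gt0|exact: nup]|exact: exprn_gt0].
have predlow2 : forall k, (1 - th1) / 2 * (sigma k / th1) * enorm (scp k) ^+ 2 <= pred k.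
  move=> k; apply: le_trans (pred_xi k).
  have -> : (1 - th1) / 2 * (sigma k / th1) * enorm (scp k) ^+ 2 =
     (1 - th1) * ((sigma k / th1) / 2 * enorm (scp k) ^+ 2) by ring.
  apply: ler_wpM2l; first exact: ltW.
  apply: ler_wpM2r; first exact: Q0.
  apply: ler_wpM2r; first by rewrite invr_ge0.
  exact: nuinv_ge.
set C := L + kB + 2 * kh + 4 * kf + 2 * kg.
have C0 : 0 <= C by rewrite /C; clear -L0 kB0 kh0 kf0 kg0; lra.
have verysucc : forall k, ~ crit k -> ssucc <= sigma k -> eh2 <= rho k.
  move=> k nc ss.
  have pp := predpos k nc.
  have T : th1 * th2 ^+ 2 * C <= sigma k * ((1 - th1) * (1 - eh2)).
    rewrite -ler_pdivrMr ?mulr_gt0 //; move: ss; rewrite ge_max => /andP[+ _].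
    by rewrite /C.
  have K := key_le (Q0 k) (_ : 0 <= C / 2) (ltW eh2') (sle2 k) (predlow2 k) _.
  have {}K : C / 2 * enorm (s k) ^+ 2 <= (1 - eh2) * pred k.
    apply: K; first by rewrite divr_ge0.
    rewrite -(ler_pM2r (_ : 0 < 2 * th1)) ?mulr_gt0 //.
    have th1n : th1 != 0 by rewrite gt_eqF.
    have -> : C / 2 * th2 ^+ 2 * (2 * th1) = th1 * th2 ^+ 2 * C by field.
    have -> : (1 - eh2) * ((1 - th1) / 2 * (sigma k / th1)) * (2 * th1)
       = sigma k * ((1 - th1) * (1 - eh2)) by field.
    exact: T.
  have D := diff k; rewrite ler_norml in D; move/andP: D => [D1 D2].
  rewrite rhoE ler_pdivlMr //; move: K; rewrite /C => K; clear -D1 D2 K; lra.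
have spfacts : forall k, exists sp, [/\ sigma k.+1 = Num.max sp smin,
    sp <= g2 * sigma k, (eh2 <= rho k -> sp <= sigma k),
    (eh1 <= rho k -> g3 * sigma k <= sp) & (rho k < eh1 -> g1 * sigma k <= sp)].
  move=> k; have [sp [c1 c2 c3 e]] := sigdef k; exists sp.
  have sp0 := sigp k.
  have h1 : sigma k <= g1 * sigma k by apply: ler_peMl; [exact: ltW|exact: ltW].
  have h2 : g1 * sigma k <= g2 * sigma k by apply: ler_wpM2r; [exact: ltW|].
  have h3 : g3 * sigma k <= sigma k by apply: ler_piMl => //; exact: ltW.
  case: (leP eh2 (rho k)) => r2.
    have [l u] := andP (c1 r2).
    have r1 : eh1 <= rho k by apply: le_trans r2.
    split; [exact: e | clear -u h1 h2; lra | move=> _; exact: u | move=> _; exact: l | by move=> r; have := lt_le_trans r r1; rewrite ltxx].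
  case: (leP eh1 (rho k)) => r1.
    have [l u] := andP (c2 (introT andP (conj r1 r2))).
    split; [exact: e| clear -u h2; lra | by [] | move=> _; clear -l h3; lra | by []].
  have [l u] := andP (c3 r1).
  split; [exact: e | clear -u; lra | by [] | by [] | move=> _; exact: l].
have smin_smax : smin <= smax by apply: le_trans smins0 _; rewrite le_max lexx.
have sig_le : forall N, (forall j, (j < N)%N -> ~ crit j) ->
    forall k, (k <= N)%N -> sigma k <= smax.
  move=> N hN; elim=> [|k IH] kN; first by rewrite S0 le_max lexx.
  have nc : ~ crit k by apply: hN.
  have sk := IH (ltnW kN).
  have [sp [e u v _ _]] := spfacts k.
  rewrite e ge_max smin_smax andbT.
  case: (leP ssucc (sigma k)) => ss.
    exact: le_trans (v (verysucc k nc ss)) sk.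
  apply: le_trans u _; apply: le_trans (_ : g2 * ssucc <= smax); last by rewrite le_max lexx orbT.
  apply: ler_wpM2l; [apply: ltW; apply: lt_le_trans g12 | exact: ltW] => //.
have nu_ge : forall k, sigma k <= smax -> numin <= nu k.
  move=> k hs; rewrite /numin /nu; apply: ler_wpM2l; first exact: ltW.
  have p1 : 0 < spnorm (B k) + sigma k by apply: ltr_wpDl (spn0 k) (sigp k).
  have p2 : 0 < kB + smax by apply: lt_le_trans p1 _; apply: lerD (A2 k) hs.
  rewrite lef_pV2 ?posrE //; exact: lerD (A2 k) hs.
pose de := 4 * kf * th1 * th2 ^+ 2 / ((1 - th1) * smin).
have eta1E : eta1 = eh1 - de by [].
have eta1p : 0 < eta1.
  rewrite eta1E subr_gt0 /de ltr_pdivrMr ?mulr_gt0 //.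
  move: sminH; rewrite ltr_pdivrMr ?mulr_gt0 // => H.
  have -> : eh1 * ((1 - th1) * smin) = smin * (eh1 * (1 - th1)) by ring.
  exact: H.
have de0 : 0 <= de.
  rewrite /de; apply: divr_ge0; last by apply: mulr_ge0; apply: ltW.
  by apply: mulr_ge0; [apply: mulr_ge0; [apply: mulr_ge0|]|]; rewrite ?sqr_ge0 // ltW.
pose c := 1 / 2 * eta1 * (1 - th1) * numin.
have decrease : forall k, ~ crit k -> sigma k <= smax -> eh1 <= rho k ->
    F k.+1 + c * eps ^+ 2 <= F k.
  move=> k nc hs r1.
  have pp := predpos k nc.
  have A : eh1 * pred k <= ared k.
    have -> : ared k = rho k * pred k by rewrite rhoE divfK // gt_eqF.
    by apply: ler_wpM2r => //; exact: ltW.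
  have ALQ : (1 - th1) / 2 * (smin / th1) * enorm (scp k) ^+ 2 <= pred k.
    apply: le_trans (predlow2 k); apply: ler_wpM2r; first exact: Q0.
    apply: ler_wpM2l; first by apply: divr_ge0 => //; exact: ltW.
    by rewrite ler_pM2r ?invr_gt0.
  have K : 2 * kf * enorm (s k) ^+ 2 <= de * pred k.
    apply: (key_le (Q0 k) _ de0 (sle2 k) ALQ).
      by apply: mulr_ge0 => //; exact: ltW.
    have -> : de * ((1 - th1) / 2 * (smin / th1)) = 2 * kf * th2 ^+ 2.
      have th1n : th1 != 0 by rewrite gt_eqF.
      have th1n' : 1 - th1 != 0 by rewrite gt_eqF.
      have sn : smin != 0 by rewrite gt_eqF.
      rewrite /de; field; apply/and3P; split; [exact: th1n|exact: sn|exact: th1n'].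
    exact: lexx.
  have P0 : (1 - th1) / 2 * numin * eps ^+ 2 <= pred k.
    apply: le_trans (predlow k nc); apply: ler_wpM2r; first exact: exprn_ge0 (ltW eps0).
    apply: ler_wpM2l; first by apply: divr_ge0 => //; exact: ltW.
    exact: nu_ge.
  have E : eta1 * ((1 - th1) / 2 * numin * eps ^+ 2) <= eta1 * pred k.
    by apply: ler_wpM2l => //; exact: ltW.
  have CE : c * eps ^+ 2 = eta1 * ((1 - th1) / 2 * numin * eps ^+ 2) by rewrite /c; ring.
  have [a1 a2 _] := A6 k.
  have [b11 b12] := absle a1; have [b21 b22] := absle a2.
  rewrite /F (xdef k) r1 CE; move: E A K; rewrite eta1E /ared => E A K.
  clear -E A K b11 b12 b21 b22; lra.
pose cS N := \sum_(k < N) (nat_of_bool (eh1 <= rho k)%R)%:R : R.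
pose cU N := \sum_(k < N) (nat_of_bool (rho k < eh1)%R)%:R : R.
have part : forall N, cS N + cU N = N%:R.
  move=> N; rewrite /cS /cU -big_split /= (eq_bigr (fun _ => 1)).
    by rewrite sumr_const card_ord.
  by move=> i _; case: leP => _ /=; rewrite ?addr0 ?add0r.
have sumF : forall N, (forall j, (j < N)%N -> ~ crit j) ->
    F N + c * eps ^+ 2 * cS N <= F 0.
  elim=> [|N IH] hN; first by rewrite /cS big_ord0 mulr0 addr0.
  have hN' : forall j, (j < N)%N -> ~ crit j by move=> j jN; apply: hN; exact: ltnW.
  have {}IH := IH hN'.
  have nc : ~ crit N by apply: hN.
  have hs : sigma N <= smax by apply: (sig_le N.+1 hN); exact: leqnSn.
  rewrite /cS big_ord_recr /= -/(cS N).
  set ce := c * eps ^+ 2 in IH *.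
  case: (leP eh1 (rho N)) => r1 /=.
    have D := decrease N nc hs r1; rewrite -/ce in D; move: IH D.
    rewrite mulrDr mulr1; lra.
  have -> : F N.+1 = F N by rewrite /F (xdef N) ifN // -ltNge.
  by rewrite addr0.
have sigln : forall N, ln s0 + cU N * ln g1 + cS N * ln g3 <= ln (sigma N).
  elim=> [|N IH]; first by rewrite /cS /cU !big_ord0 !mul0r !addr0 S0.
  rewrite /cS /cU !big_ord_recr /= -/(cS N) -/(cU N).
  have [sp [e _ _ v3 v1]] := spfacts N.
  have sN := sigp N; have sN1 := sigp N.+1.
  have g3s : 0 < g3 * sigma N by apply: mulr_gt0.
  have g1s : 0 < g1 * sigma N by apply: mulr_gt0.
  case: (leP eh1 (rho N)) => r1 /=.
    have : ln (g3 * sigma N) <= ln (sigma N.+1).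
      rewrite ler_ln ?posrE // e le_max; apply/orP; left; exact: v3.
    rewrite lnM ?posrE //; move: IH; rewrite !mulrDl ?mulr1n ?mulr0n ?mul1r ?mul0r => H1 H2.
    clear -H1 H2; lra.
  have : ln (g1 * sigma N) <= ln (sigma N.+1).
    rewrite ler_ln ?posrE // e le_max; apply/orP; left; exact: v1.
  rewrite lnM ?posrE //; move: IH; rewrite !mulrDl ?mulr1n ?mulr0n ?mul1r ?mul0r => H1 H2.
  clear -H1 H2; lra.
have l1p : 0 < ln g1 by apply: ln_gt0.
have l3n : ln g3 <= 0.
  by rewrite -ln1 ler_ln ?posrE.
have s0p : 0 < s0 by apply: lt_le_trans smins0.
have smaxp : 0 < smax by apply: lt_le_trans s0p _; rewrite le_max lexx.
have numinp : 0 < numin by rewrite /numin divr_gt0 // addr_gt0.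
have cp : 0 < c by rewrite /c; apply: mulr_gt0 => //; apply: mulr_gt0 => //; apply: mulr_gt0.
have main : forall N, (forall j, (j < N)%N -> ~ crit j) ->
    cS N + cU N <= (1 + `|ln g3 / ln g1|) * omega * eps ^-2 + ln (smax / s0) / ln g1.
  move=> N hN.
  have H1 := sumF N hN.
  have H2 : flow <= F N.
    have := A7 (x N); rewrite -(fineK (hfin N)) -EFinD lee_fin //.
  have F0 : F 0 = f x0 + fine (h x0) by rewrite /F X0.
  have Aom : cS N <= omega * eps ^-2.
    have -> : omega * eps ^-2 = (f x0 + fine (h x0) - flow) / (c * eps ^+ 2).
      by rewrite /omega -/c -mulrA -invfM.
    rewrite ler_pdivlMr; last by apply: mulr_gt0 => //; apply: exprn_gt0.
    rewrite -F0; move: H1 H2; set ce := c * eps ^+ 2 => H1 H2.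
    clear -H1 H2; lra.
  have sN : sigma N <= smax by apply: (sig_le N hN).
  have H3 : ln (sigma N) <= ln smax by rewrite ler_ln ?posrE // sigp.
  have H4 := sigln N.
  have U1 : cU N * ln g1 <= ln smax - ln s0 - cS N * ln g3.
    clear -H3 H4; lra.
  have U : cU N <= ln (smax / s0) / ln g1 - cS N * (ln g3 / ln g1).
    rewrite ln_div ?posrE //.
    have -> : (ln smax - ln s0) / ln g1 - cS N * (ln g3 / ln g1)
       = (ln smax - ln s0 - cS N * ln g3) / ln g1.
      by field; rewrite gt_eqF.
    by rewrite ler_pdivlMr.
  have rn : ln g3 / ln g1 <= 0 by rewrite mulr_le0_ge0 // invr_ge0 ltW.
  rewrite (ler0_norm rn).
  have W : (1 - ln g3 / ln g1) * cS N <= (1 - ln g3 / ln g1) * (omega * eps ^-2).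
    apply: ler_wpM2l Aom; rewrite subr_ge0; exact: le_trans rn ler01.
  rewrite -(mulrA (1 - _)).
  move: U W; set r := ln g3 / ln g1; set Lg := ln (smax / s0) / ln g1.
  set a := cS N; set u := cU N; set w := omega * eps ^-2 => U W.
  clear -U W; lra.
split.
  case: (pselect (exists k, crit k)) => // nex; exfalso.
  set bnd := (1 + `|ln g3 / ln g1|) * omega * eps ^-2 + ln (smax / s0) / ln g1.
  have hN : forall j, (j < (Num.truncn bnd).+1)%N -> ~ crit j.
    by move=> j _ cj; apply: nex; exists j.
  have := main _ hN; rewrite part => H.
  have := lt_le_trans (truncnS_gt bnd) H; rewrite ltxx.
  by [].
move=> keps ck hk.
rewrite (@card_sumR R keps (fun k => eh1 <= rho k)) (@card_sumR R keps (fun k => rho k < eh1)).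
exact: main.
Qed.
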